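(* Let $G=\mathrm{GL}_n$ with diagonal torus $A$, let $M=M_{(m_1,\dots,m_r)}$ be a standard (block diagonal) Levi subgroup, let $\mu\in X_*(A)_{\mathrm{dom}}$ be minuscule and let $x\in\pi_1(M)$. The following are equivalent: (i) $x\in\kappa_M(W\mu)$; (ii) the unique $\nu\in X_M\otimes\mathbf Q$ mapping to $x$ under $\kappa_M\otimes\mathbf Q$ lies in $\mathrm{Conv}(W\mu)$. Moreover, if $x$ satisfies these conditions and $\tilde\nu\in X_*(A)$ is the unique $M$-dominant $M$-minuscule element with $\kappa_M(\tilde\nu)=x$, then $\tilde\nu\in W\mu$.
   Context: $X_*(A)=\mathbf Z^n$, $W=S_n$ acting by permutations; dominant means non-increasing entries. $\mu$ is minuscule if $\langle\mu,\alpha\rangle\in\{0,\pm1\}$ for all roots $\alpha$ (i.e. $\mu_1-\mu_n\le1$). $\pi_1(M)=X_*(A)/(\text{coroot lattice of }M)\cong\mathbf Z^r$ (block sums), $\kappa_M$ the projection $X_*(A)\to\pi_1(M)$. $A_M$ is the maximal split torus in the center of $M$, $X_M=X_*(A_M)$ (vectors constant on blocks); $\kappa_M\otimes\mathbf Q$ restricts to an isomorphism $X_M\otimes\mathbf Q\to\pi_1(M)\otimes\mathbf Q$. $\mathrm{Conv}$ denotes convex hull in $\mathbf R^n$. $M$-dominant means non-increasing within each block; $M$-minuscule means $\langle\tilde\nu,\alpha\rangle\in\{0,\pm1\}$ for all roots $\alpha$ of $M$. Each element of $\pi_1(M)$ is the image of a unique $M$-dominant $M$-minuscule element. *)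

(* Defs.v *)
From HB Require Import structures.
From mathcomp Require Import all_boot all_order all_algebra all_fingroup.
From mathcomp Require Import reals.
Set Implicit Arguments. Unset Strict Implicit. Unset Printing Implicit Defensive.
Import Order.TTheory GRing.Theory Num.Theory.
Local Open Scope ring_scope.

(* X_*(A) = Z^n for the diagonal torus of GL_n *)
Definition cochar (n : nat) := {ffun 'I_n -> int}.

(* W = S_n acting by permutation of coordinates: (s.l)_i = l_(s^-1 i) *)
Definition wact n (s : 'S_n) (l : cochar n) : cochar n := [ffun i => l (s^-1 i)%g].

Definition dominant n (mu : cochar n) : Prop :=
  forall i j : 'I_n, (i <= j)%N -> mu j <= mu i.

(* minuscule: <mu, alpha> in {0,1,-1} for every root alpha = e_i - e_j (i <> j) *)
Definition minuscule n (mu : cochar n) : Prop :=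
  forall i j : 'I_n, i != j -> `|mu i - mu j| <= 1.

(* Standard Levi M_(m_1,...,m_r), m = [:: m_1; ...; m_r]:
   index i (0-based) lies in block k iff m_1+..+m_k <= i < m_1+..+m_(k+1) *)
Definition in_block (m : seq nat) (k i : nat) : bool :=
  (sumn (take k m) <= i < sumn (take k.+1 m))%N.

(* pi_1(M) = Z^r *)
Definition pi1M (m : seq nat) := {ffun 'I_(size m) -> int}.

Definition kappaM n (m : seq nat) (l : cochar n) : pi1M m :=
  [ffun k : 'I_(size m) => \sum_(i < n | in_block m k i) l i].

(* an element of X_* (A) (x) Q, i.e. Q^n, lies in X_M (x) Q: constant on blocks *)
Definition in_XM_Q n (m : seq nat) (nu : 'I_n -> rat) : Prop :=
  forall (k : nat) (i j : 'I_n), in_block m k i -> in_block m k j -> nu i = nu j.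

Definition kappaM_Q_eq n (m : seq nat) (nu : 'I_n -> rat) (x : pi1M m) : Prop :=
  forall k : 'I_(size m), \sum_(i < n | in_block m k i) nu i = (x k)%:~R.

Definition in_conv (R : realType) n (I : finType) (p : I -> 'I_n -> R)
    (v : 'I_n -> R) : Prop :=
  exists w : I -> R, (forall a, 0 <= w a) /\ \sum_a w a = 1 /\
    forall i, v i = \sum_a w a * p a i.

Definition in_conv_orbit (R : realType) n (mu : cochar n) (v : 'I_n -> R) : Prop :=
  in_conv (fun s : 'S_n => fun i => ((wact s mu) i)%:~R : R) v.

Definition M_dominant n (m : seq nat) (l : cochar n) : Prop :=
  forall (k : nat) (i j : 'I_n), in_block m k i -> in_block m k j ->
    (i <= j)%N -> l j <= l i.

(* M-minuscule: <l, alpha> in {0,1,-1} for all roots alpha = e_i - e_j of M *)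
Definition M_minuscule n (m : seq nat) (l : cochar n) : Prop :=
  forall (k : nat) (i j : 'I_n), in_block m k i -> in_block m k j ->
    i != j -> `|l i - l j| <= 1.

(* Main.v *)
Require Import Defs.
From HB Require Import structures.
From mathcomp Require Import all_boot all_order all_algebra all_fingroup.
From mathcomp Require Import reals zify ring lra.
Set Implicit Arguments. Unset Strict Implicit. Unset Printing Implicit Defensive.
Import Order.TTheory GRing.Theory Num.Theory.
Local Open Scope ring_scope.

Lemma sumn_take_mono (m : seq nat) k k' : (k <= k')%N ->
  (sumn (take k m) <= sumn (take k' m))%N.
Proof.
elim: m k k' => [|y m IH] [|k] [|k'] //=; rewrite ?ltnS => h; try lia.
have := IH _ _ h; lia.
Qed.

Lemma in_block_uniq m k k' i : in_block m k i -> in_block m k' i -> k = k'.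
Proof.
wlog hk : k k' / (k <= k')%N.
  move=> W h1 h2; case: (leqP k k') => hh; first exact: W.
  by apply/esym/W => //; apply: ltnW.
rewrite /in_block => /andP[h1 h2] /andP[h3 h4].
case: (ltngtP k k') => // hlt; last by lia.
have := sumn_take_mono m hlt; lia.
Qed.

Lemma in_block_size m k i : in_block m k i -> (k < size m)%N.
Proof.
rewrite /in_block; case: (ltnP k (size m)) => // h.
rewrite !take_oversize //; lia.
Qed.

Lemma in_block_lt m k i : in_block m k i -> (i < sumn m)%N.
Proof.
move=> h; have hk := in_block_size h.
have := sumn_take_mono m hk; rewrite take_size.
move: h; rewrite /in_block; lia.
Qed.

Lemma in_block_ex m i : (i < sumn m)%N -> exists2 k, (k < size m)%N & in_block m k i.
Proof.
suff H : forall k, (i < sumn (take k m))%N -> exists2 k', (k' < k)%N & in_block m k' i.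
  by move=> h; case: (H (size m)); rewrite ?take_size // => k h1 h2; exists k.
elim=> [|k IH]; first by rewrite take0.
case: (ltnP i (sumn (take k m))) => h1 h2.
  by case: (IH h1) => k' ? ?; exists k' => //; lia.
by exists k => //; rewrite /in_block h1 h2.
Qed.

Definition bkn (m : seq nat) (i : nat) : nat :=
  if [pick k : 'I_(size m) | in_block m k i] is Some k then val k else 0%N.

Lemma bknP m i : (i < sumn m)%N -> (bkn m i < size m)%N /\ in_block m (bkn m i) i.
Proof.
move=> h; rewrite /bkn; case: pickP => [k hk|].
  by split; [apply: ltn_ord | ].
case: (in_block_ex h) => k hk hb /(_ (Ordinal hk)) /=; by rewrite hb.
Qed.

Lemma bkn_eq m k i : in_block m k i -> bkn m i = k.
Proof.
move=> h; have [_ h2] := bknP (in_block_lt h).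
exact: in_block_uniq h2 h.
Qed.

Lemma in_blockE m k i : (i < sumn m)%N -> in_block m k i = (bkn m i == k).
Proof.
move=> hi; apply/idP/eqP; first exact: bkn_eq.
by move=> <-; have [] := bknP hi.
Qed.

Lemma sumn_take_succ m k : (k < size m)%N ->
  sumn (take k.+1 m) = (sumn (take k m) + nth 0%N m k)%N.
Proof.
elim: m k => [|y m IH] [|k] //=; first by rewrite take0 /=; lia.
by rewrite ltnS => /IH ->; lia.
Qed.

Lemma sum_block (V : nmodType) m n k (F : nat -> V) :
  (sumn (take k.+1 m) <= n)%N ->
  \sum_(i < n | in_block m k i) F i =
  \sum_(sumn (take k m) <= i < sumn (take k.+1 m)) F i.
Proof.
move=> h; rewrite (big_nat_widen _ _ _ _ _ h) big_geq_mkord.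
by apply: eq_bigl => i /=; rewrite /in_block andbC.
Qed.

Lemma sum_block_const (V : nmodType) m n k (c : V) :
  sumn m = n -> (k < size m)%N ->
  \sum_(i < n | in_block m k i) c = c *+ nth 0%N m k.
Proof.
move=> hn hk; rewrite (sum_block (fun _ => c)).
  by rewrite sumr_const_nat sumn_take_succ //; congr (_ *+ _); lia.
by rewrite -hn -{2}(take_size m); apply: sumn_take_mono.
Qed.

Lemma sum_blocks (V : nmodType) m n (F : 'I_n -> V) :
  sumn m = n ->
  \sum_(k < size m) \sum_(i < n | in_block m k i) F i = \sum_(i < n) F i.
Proof.
move=> hn.
rewrite (exchange_big_dep xpredT) //=; apply: eq_bigr => i _.
have hi : (i < sumn m)%N by rewrite hn.
have [h1 h2] := bknP hi.
rewrite (big_pred1 (Ordinal h1)) // => k /=.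
by rewrite in_blockE ?hn //; apply/eqP/eqP => [h|->] //; apply: val_inj; rewrite /= h.
Qed.

Section PermA.
Variable a : int.
Definition twov (y : int) := (y == a) || (y == a + 1).

Lemma count_two (P : pred int) (s : seq int) : all twov s ->
  count P s = (P a * (size s - count_mem (a + 1)%R s) + P (a + 1)%R * count_mem (a + 1)%R s)%N.
Proof.
elim: s => [|y s IH] /=; first by rewrite !muln0.
move=> /andP[hy /IH ->].
have hc : (count_mem (a + 1)%R s <= size s)%N by apply: count_size.
have ne : (a == a + 1) = false by rewrite -[X in X == _]addr0 (inj_eq (addrI a)) eq_sym oner_eq0.
case/orP: hy => /eqP ->; rewrite ?eqxx ?ne /=;
  move: hc; case: (P a); case: (P (a+1)); rewrite /=;
  move: (count_mem _ s) (size s) => c z; lia.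
Qed.

Lemma sum_two (s : seq int) : all twov s ->
  \sum_(y <- s) y = a *+ size s + (count_mem (a + 1) s)%:R.
Proof.
elim: s => [|y s IH] /=; first by rewrite big_nil.
move=> /andP[hy /IH]; rewrite big_cons => ->.
have ne : (a == a + 1) = false by rewrite -[X in X == _]addr0 (inj_eq (addrI a)) eq_sym oner_eq0.
case/orP: hy => /eqP ->; rewrite ?eqxx ?ne /= mulrS natrD //=.
  by rewrite add0r addrA.
by move: (_ *+ _) (_%:R) => u w; ring.
Qed.

Lemma permA n (mu v : cochar n) :
  (forall i, mu i = a \/ mu i = a + 1) -> (forall i, v i = a \/ v i = a + 1) ->
  \sum_i v i = \sum_i mu i -> exists s : 'S_n, v = wact s mu.
Proof.
move=> hmu hv hs.
have E (f : cochar n) : val [tuple f i | i < n] = map f (enum 'I_n).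
  by rewrite /mktuple /= enumT.
have A (f : cochar n) : (forall i, f i = a \/ f i = a + 1) -> all twov [tuple f i | i < n].
  move=> hf; apply/allP => y; rewrite E => /mapP[i _ ->].
  by rewrite /twov; case: (hf i) => ->; rewrite eqxx ?orbT.
have S (f : cochar n) : \sum_i f i = \sum_(y <- [tuple f i | i < n]) y.
  by rewrite E big_map big_enum.
have Sz (f : cochar n) : size [tuple f i | i < n] = n by rewrite size_tuple.
have hc : count_mem (a + 1) [tuple v i | i < n] = count_mem (a + 1) [tuple mu i | i < n].
  move: hs; rewrite (S v) (S mu) (sum_two (A _ hv)) (sum_two (A _ hmu)) (Sz v) (Sz mu).
  by move/addrI/eqP; rewrite eqr_nat => /eqP.
have : perm_eq [tuple v i | i < n] [tuple mu i | i < n].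
  by apply/seq.permP => P; rewrite (count_two P (A _ hv)) (count_two P (A _ hmu)) (Sz v) (Sz mu) hc.
move/(@tuple_permP _ n _ [tuple mu i | i < n]) => [p hp].
exists p^-1%g; apply/ffunP => i; rewrite /wact ffunE invgK.
have h2 : nth 0 [tuple v i | i < n] i = nth 0 [tuple tnth [tuple mu i | i < n] (p i) | i < n] i.
  by rewrite -hp.
by move: h2; rewrite !nth_mktuple tnth_mktuple.
Qed.
End PermA.

Lemma mu_vals n (mu : cochar n) : dominant mu -> minuscule mu ->
  exists a : int, forall i, mu i = a \/ mu i = a + 1.
Proof.
case: n mu => [|n] mu hd hm; first by exists 0 => -[].
exists (mu ord_max) => i.
have h1 := hd i ord_max (leq_ord i).
case: (eqVneq i ord_max) => [->|hne]; first by left.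
have := hm i ord_max hne.
move: h1; move: (mu i) (mu ord_max) => u w; rewrite ler_norml; lia.
Qed.

Lemma wact_sum n (s : 'S_n) (mu : cochar n) : \sum_i wact s mu i = \sum_i mu i.
Proof.
rewrite (reindex_inj (@perm_inj _ s)) /=; apply: eq_bigr => i _.
by rewrite /wact ffunE permK.
Qed.

Lemma wact_vals n (s : 'S_n) (mu : cochar n) a : (forall i, mu i = a \/ mu i = a + 1) ->
  forall i, wact s mu i = a \/ wact s mu i = a + 1.
Proof. by move=> h i; rewrite /wact ffunE. Qed.

Lemma kappa_total n m (l : cochar n) : sumn m = n ->
  \sum_(k < size m) kappaM m l k = \sum_i l i.
Proof. by move=> hn; rewrite -(sum_blocks _ hn); apply: eq_bigr => k _; rewrite ffunE. Qed.

Lemma block_bounds n m a (v : cochar n) (k : 'I_(size m)) : sumn m = n ->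
  (forall i, v i = a \/ v i = a + 1) ->
  a *+ nth 0%N m k <= kappaM m v k <= (a + 1) *+ nth 0%N m k.
Proof.
move=> hn hv; rewrite ffunE -!(sum_block_const _ hn (ltn_ord k)).
apply/andP; split; apply: ler_sum => i _; case: (hv i) => ->; lra.
Qed.

Lemma part2 n m a (mu nut : cochar n) (s0 : 'S_n) : sumn m = n ->
  (forall i, mu i = a \/ mu i = a + 1) -> M_minuscule m nut ->
  kappaM m nut = kappaM m (wact s0 mu) -> exists s, nut = wact s mu.
Proof.
move=> hn hmu hM hk.
have hvv := wact_vals s0 hmu.
have hv : forall i, nut i = a \/ nut i = a + 1.
  move=> i; have hi : (i < sumn m)%N by rewrite hn.
  have [hkk hb] := bknP hi; set k := Ordinal hkk.
  have := block_bounds k hn hvv; rewrite -hk ffunE => /andP[lo up].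
  have ha : a <= nut i.
    rewrite leNgt; apply/negP => hlt.
    suff : \sum_(j < n | in_block m k j) nut j < a *+ nth 0%N m k by rewrite ltNge lo.
    rewrite -(sum_block_const _ hn (ltn_ord k)) (bigD1 i) //= [X in _ < X](bigD1 i) //=.
    apply: ltr_leD => //; apply: ler_sum => j /andP[hj hji].
    have := hM _ _ _ hj hb hji; move: hlt; move: (nut i) (nut j) => u w.
    rewrite ler_norml; lia.
  have hb2 : nut i <= a + 1.
    rewrite leNgt; apply/negP => hlt.
    suff : (a + 1) *+ nth 0%N m k < \sum_(j < n | in_block m k j) nut j by rewrite ltNge up.
    rewrite -(sum_block_const _ hn (ltn_ord k)) (bigD1 i) //= [X in _ < X](bigD1 i) //=.
    apply: ltr_leD => //; apply: ler_sum => j /andP[hj hji].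
    have := hM _ _ _ hj hb hji; move: hlt; move: (nut i) (nut j) => u w.
    rewrite ler_norml; lia.
  move: ha hb2; move: (nut i) => u; lia.
apply: (permA hmu hv).
by rewrite -(kappa_total _ hn) hk kappa_total // wact_sum.
Qed.

Lemma count_lt (L c : nat) : (c <= L)%N ->
  \sum_(0 <= j < L) (if (j < c)%N then 1 else 0 : int) = c%:R.
Proof.
move=> hc; rewrite (big_cat_nat (n := c)) //=.
rewrite (eq_big_nat _ _ (F2 := fun _ => 1)); last by move=> j /andP[_ ->].
rewrite sumr_const_nat subn0 big1_seq ?addr0 // => j /andP[_].
by rewrite mem_index_iota leqNgt => /andP[/negbTE ->].
Qed.

Lemma ii_i (R : realType) n m a (mu : cochar n) (x : pi1M m) (nu : 'I_n -> rat) :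
  sumn m = n -> (forall i, mu i = a \/ mu i = a + 1) ->
  kappaM_Q_eq nu x -> in_conv_orbit mu (fun i => (ratr (nu i) : R)) ->
  exists s, kappaM m (wact s mu) = x.
Proof.
move=> hn hmu hK [w [w0 [w1 hw]]].
have hb : forall i, a%:~R <= nu i <= (a + 1)%:~R.
  move=> i; rewrite -!(ler_rat R) !ratr_int hw.
  have -> : (a%:~R : R) = \sum_t w t * a%:~R by rewrite -mulr_suml w1 mul1r.
  have -> : ((a + 1)%:~R : R) = \sum_t w t * (a + 1)%:~R by rewrite -mulr_suml w1 mul1r.
  apply/andP; split; apply: ler_sum => t _; apply: ler_wpM2l => //;
    rewrite ler_int; case: (wact_vals t hmu i) => ->; lra.
have hs : \sum_i nu i = \sum_i (mu i)%:~R.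
  apply: (fmorph_inj (ratr : rat -> R)); rewrite !rmorph_sum /=.
  under eq_bigr do rewrite hw.
  rewrite exchange_big /=.
  under eq_bigr do rewrite -mulr_sumr -rmorph_sum /= (@wact_sum _ _ mu).
  by rewrite -mulr_suml w1 mul1r rmorph_sum /=; apply: eq_bigr => i _; rewrite ratr_int.
have hx : forall k : 'I_(size m), a *+ nth 0%N m k <= x k <= (a + 1) *+ nth 0%N m k.
  move=> k; rewrite -!(ler_int rat) -(hK k) !rmorphMn.
  rewrite -!(sum_block_const _ hn (ltn_ord k)).
  by apply/andP; split; apply: ler_sum => i _; case/andP: (hb i).
have htot : \sum_(k < size m) x k = \sum_i mu i.
  apply: (@intr_inj rat); rewrite !rmorph_sum /= -hs -(sum_blocks _ hn).
  by apply: eq_bigr => k _; rewrite hK.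
pose xn (k : nat) : int := if insub k is Some k' then x k' else 0.
have xnE : forall k : 'I_(size m), xn k = x k by move=> k; rewrite /xn valK.
pose cn (k : nat) : nat := `|xn k - a *+ nth 0%N m k|%N.
pose vn (j : nat) : int := a + (if (j - sumn (take (bkn m j) m) < cn (bkn m j))%N then 1 else 0).
pose v : cochar n := [ffun i : 'I_n => vn i].
have hvv : forall i, v i = a \/ v i = a + 1.
  by move=> i; rewrite ffunE /vn; case: ifP => _; [right | left; rewrite addr0].
have hkv : kappaM m v = x.
  apply/ffunP => k; rewrite ffunE.
  under eq_bigr do rewrite ffunE.
  have hk := ltn_ord k.
  have hle : (sumn (take k.+1 m) <= n)%N.
    by rewrite -hn; have := sumn_take_mono m hk; rewrite take_size.
  rewrite (sum_block vn hle).
  set st := sumn (take k m); set L := nth 0%N m k.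
  have hst : sumn (take k.+1 m) = (st + L)%N by rewrite sumn_take_succ.
  rewrite (eq_big_nat _ _ (F2 := fun j => a + (if (j - st < cn k)%N then 1 else 0))); last first.
    move=> j hj; rewrite /vn (bkn_eq (k := k)) //.
  rewrite big_split /= sumr_const_nat hst addKn.
  rewrite -{1}[st]add0n big_addn addKn.
  rewrite (eq_big_nat _ _ (F2 := fun j => if (j < cn k)%N then 1 else 0)); last first.
    by move=> j _; rewrite addnK.
  have /andP[h1 h2] := hx k.
  rewrite count_lt /cn xnE; last first.
    rewrite ?xnE; move: h1 h2; rewrite mulrnDl; move: (a *+ _) (x k) => u xk h1; rewrite natz /L; lia.
  move: h1; move: (a *+ L) (x k) => u xk h1; rewrite natz; lia.
have [s hs'] : exists s, v = wact s mu.
  apply: permA hmu hvv _.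
  by rewrite -(kappa_total _ hn) hkv htot.
by exists s; rewrite -hs'.
Qed.

Section Avg.
Variables (R : realType) (n : nat) (m : seq nat).
Hypothesis hn : sumn m = n.

Definition Hs : {set 'S_n} := [set h : 'S_n | [forall j : 'I_n, bkn m (h j) == bkn m j]].

Lemma Hs1 : (1%g : 'S_n) \in Hs.
Proof. by rewrite inE; apply/forallP => j; rewrite perm1. Qed.

Lemma bkn_tperm (i j y : 'I_n) : bkn m j = bkn m i -> bkn m (tperm i j y) = bkn m y.
Proof. by move=> e; case: tpermP => [->|->|] //. Qed.

Definition cnt (i j : 'I_n) : R := \sum_(h : 'S_n | (h \in Hs) && (h i == j)) 1.

Lemma cntE (i j : 'I_n) : cnt i j = if bkn m j == bkn m i then cnt i i else 0.
Proof.
case: eqP => e.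
  rewrite /cnt (reindex_inj (mulIg (tperm i j))); apply: eq_bigl => h /=.
  rewrite permM -{3}(tpermL i j) (inj_eq perm_inj); congr (_ && _).
  rewrite !inE; apply/forallP/forallP => H y; move: (H y); rewrite permM bkn_tperm //.
rewrite /cnt; apply: big1 => h /andP[]; rewrite inE => /forallP /(_ i) /eqP hb /eqP hij.
by case: e; rewrite -hij.
Qed.

Lemma cnt_gt0 (i : 'I_n) : 0 < cnt i i.
Proof.
rewrite /cnt (bigD1 1%g) /=; last by rewrite Hs1 perm1 eqxx.
by apply: ltr_wpDr; [apply: sumr_ge0 => ? _; apply: ler01 | apply: ltr01].
Qed.

Lemma avg (i : 'I_n) (g : 'I_n -> R) :
  \sum_(h in Hs) g (h i) = (\sum_(j : 'I_n | bkn m j == bkn m i) g j) * cnt i i.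
Proof.
rewrite (partition_big (fun h : 'S_n => h i) xpredT) //=.
rewrite (eq_bigr (fun j : 'I_n => g j * cnt i j)); last first.
  move=> j _; rewrite /cnt mulr_sumr; apply: eq_bigr => h /andP[_ /eqP ->].
  by rewrite mulr1.
rewrite mulr_suml [RHS]big_mkcond /=; apply: eq_bigr => j _.
by rewrite cntE; case: ifP => _; rewrite ?mulr0.
Qed.
End Avg.

Lemma i_ii (R : realType) n m (mu : cochar n) (s : 'S_n) :
  all (fun a => (0 < a)%N) m -> sumn m = n ->
  exists nu : 'I_n -> rat, [/\ in_XM_Q m nu, kappaM_Q_eq nu (kappaM m (wact s mu)) &
      in_conv_orbit mu (fun i => (ratr (nu i) : R))].
Proof.
move=> hpos hn.
set v := wact s mu; set x := kappaM m v.
have hL : forall k, (k < size m)%N -> (0 < nth 0%N m k)%N by move=> k; apply/all_nthP.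
pose xn (k : nat) : int := if insub k is Some k' then x k' else 0.
have xnE : forall k : 'I_(size m), xn k = x k by move=> k; rewrite /xn valK.
pose nu (i : 'I_n) : rat := (xn (bkn m i))%:~R / (nth 0%N m (bkn m i))%:R.
exists nu; split.
- by move=> k i j hi hj; rewrite /nu (bkn_eq hi) (bkn_eq hj).
- move=> k; rewrite (eq_bigr (fun _ => (x k)%:~R / (nth 0%N m k)%:R)); last first.
    by move=> i hi; rewrite /nu (bkn_eq hi) xnE.
  rewrite (sum_block_const _ hn (ltn_ord k)) -(mulr_natr ((x k)%:~R / _)) divfK //.
  by rewrite pnatr_eq0 -lt0n hL.
pose c : R := (#|@Hs n m|%:R)^-1.
have key : forall h : 'S_n, ((s * h^-1)^-1 * s)%g = h.
  by move=> h; rewrite invMg invgK mulgKV.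
have finj : injective (fun h : 'S_n => (s * h^-1)%g).
  by move=> h1 h2 /mulgI /invg_inj.
exists (fun t => if ((t^-1 * s)%g \in @Hs n m) then c else 0); split; [|split].
- by move=> t; case: ifP => _ //; rewrite /c invr_ge0 ler0n.
- rewrite (reindex_inj finj) /=.
  under eq_bigr do rewrite key.
  rewrite -big_mkcond sumr_const /c -(mulr_natr (_^-1)) mulVf // pnatr_eq0 -lt0n.
  by apply/card_gt0P; exists 1%g; apply: Hs1.
move=> i.
have hi : (i < sumn m)%N by rewrite hn.
have [hk hb] := bknP hi; set k := Ordinal hk.
rewrite (reindex_inj finj) /=.
under eq_bigr do rewrite key.
have E : forall h : 'S_n, wact (s * h^-1) mu i = v (h i).
  by move=> h; rewrite /v /wact !ffunE invMg invgK permM.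
under eq_bigr do rewrite E.
rewrite (eq_bigr (fun h => c * (if h \in @Hs n m then (v (h i))%:~R else 0))); last first.
  by move=> h _; case: ifP => _; rewrite ?mul0r ?mulr0.
rewrite -mulr_sumr -big_mkcond /=.
rewrite (@avg R n m i (fun j => (v j)%:~R)).
have hcard : (#|@Hs n m|%:R : R) = (nth 0%N m k)%:R * @cnt R n m i i.
  rewrite -sumr_const (@avg R n m i (fun _ => (1 : R))); congr (_ * _).
  rewrite -(sum_block_const _ hn hk); apply: eq_bigl => j.
  by rewrite (in_blockE _ (_ : (j < sumn m)%N)) ?hn // eq_sym.
have hsum : \sum_(j : 'I_n | bkn m j == bkn m i) ((v j)%:~R : R) = (x k)%:~R.
  rewrite /x ffunE rmorph_sum /=; apply: eq_bigl => j.
  by rewrite (in_blockE _ (_ : (j < sumn m)%N)) ?hn // eq_sym.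
rewrite hsum /c hcard /nu fmorph_div /= ratr_int ratr_nat.
have -> : xn (bkn m i) = x k by rewrite -xnE.
have hN := @cnt_gt0 R n m i.
have hL0 : (nth 0%N m (bkn m i))%:R != (0 : R) by rewrite pnatr_eq0 -lt0n hL.
field.
by rewrite hL0 /= gt_eqF.
Qed.

Theorem lemma4p7 (R : realType) (n : nat) (m : seq nat) (mu : cochar n)
    (x : pi1M m) :
  all (fun a => (0 < a)%N) m -> sumn m = n ->
  dominant mu -> minuscule mu ->
  ((exists s : 'S_n, kappaM m (wact s mu) = x) <->
   (exists nu : 'I_n -> rat, [/\ in_XM_Q m nu, kappaM_Q_eq nu x &
      in_conv_orbit mu (fun i => (ratr (nu i) : R))])) /\
  ((exists s : 'S_n, kappaM m (wact s mu) = x) ->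
   forall nut : cochar n, M_dominant m nut -> M_minuscule m nut ->
     kappaM m nut = x -> exists s : 'S_n, nut = wact s mu).
Proof.
move=> hpos hn hd hm.
have [a hmu] := mu_vals hd hm.
split; [split|].
- by case=> s <-; apply: i_ii.
- by case=> nu [_ hK hc]; apply: (ii_i hn hmu hK hc).
- move=> [s0 hs0] nut _ hM hk.
  by apply: (part2 (s0 := s0) hn hmu hM); rewrite hk hs0.
Qed.
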